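(* If $k\ne\mathbb{F}_2$, there exists a $k$-linear autoequivalence $F$ of $\mathbf{Perf}(A)$ with $F\circ[1]=[1]\circ F$ such that $F$, together with the identity comparison $F\circ[1]=[1]\circ F$, is not exact (it does not send distinguished triangles to distinguished triangles). Explicitly, for any $\lambda\in k\setminus\{0,1\}$ one may take $F$ to be the identity on the objects $X_i[\alpha]$ and to act on the generators by $F(g)=\lambda^\alpha g$ for every generator $g\in\{1^i_{j[\alpha]},\epsilon^i_{j[\alpha]}\}$ of $\mathrm{Hom}(X_i,X_j[\alpha])$ (with $F$ the identity on $\mathrm{End}(X_i)$), extended additively and compatibly with shifts.
   Context: $k$ is a field, $A=k[\epsilon]/(\epsilon^2)$, $\mathbf{Perf}(A)$ the homotopy category of bounded complexes of finitely generated free $A$-modules, whose indecomposables are the $X_i[\alpha]$, $i\ge1,\alpha\in\mathbb{Z}$. $X_i$ is the complex with $A$ in degrees $-i,\dots,-1$ and differentials multiplication by $\epsilon$; $X_j[\alpha]$ is modelled as the complex with $A$ in degrees $-j-\alpha,\dots,-1-\alpha$ and differentials $\epsilon$. For $\max\{0,i-j\}\le\alpha<i$, $1^i_{j[\alpha]}$ is the class of the chain map $X_i\to X_j[\alpha]$ that is the identity in degrees where both are nonzero and $0$ elsewhere; for $-j<\alpha\le\min\{0,i-j\}$, $\epsilon^i_{j[\alpha]}$ is the class of the chain map that is multiplication by $\epsilon$ in degree $-1$ and $0$ elsewhere; these span $\mathrm{Hom}(X_i,X_j[\alpha])$ (with basis $\mathrm{id},\epsilon^i_{i[0]}$ when $i=j,\alpha=0$,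 and $\mathrm{Hom}=0$ otherwise). *)

(* Defs.v *)
(* A concrete model of Perf(A) = K^b(free f.g. A-modules),
   A = k[eps]/(eps^2), with its shift functor and distinguished triangles. *)
From HB Require Import structures.
From mathcomp Require Import all_boot all_order all_algebra.
Set Implicit Arguments. Unset Strict Implicit. Unset Printing Implicit Defensive.
Import Order.TTheory GRing.Theory Num.Theory.
Local Open Scope ring_scope.

Section Perf.
Variable k : fieldType.

(* An A-linear map A^n -> A^m is a matrix M0 + eps M1 with M0, M1 in 'M[k]_(m,n). *)
Definition amx (m n : nat) := ('M[k]_(m, n) * 'M[k]_(m, n))%type.
Definition amul m n p (M : amx m n) (N : amx n p) : amx m p :=
  (M.1 *m N.1, M.1 *m N.2 + M.2 *m N.1).
Definition aadd m n (M N : amx m n) : amx m n := (M.1 + N.1, M.2 + N.2).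
Definition aopp m n (M : amx m n) : amx m n := (- M.1, - M.2).
Definition ascale m n (c : k) (M : amx m n) : amx m n := (c *: M.1, c *: M.2).
Definition azero m n : amx m n := (0, 0).
Definition aid n : amx n n := (1%:M, 0).
Definition ablock m1 m2 n1 n2 (Aul : amx m1 n1) (Aur : amx m1 n2)
  (Adl : amx m2 n1) (Adr : amx m2 n2) : amx (m1 + m2) (n1 + n2) :=
  (block_mx Aul.1 Aur.1 Adl.1 Adr.1, block_mx Aul.2 Aur.2 Adl.2 Adr.2).

(* Raw cochain complexes: the term in degree n is A^(rk n),
   dif n : A^(rk n) -> A^(rk (n+1)). *)
Record cx := Cx { rk : int -> nat ; dif : forall n : int, amx (rk (n + 1)) (rk n) }.

Definition cx_ok (X : cx) : Prop :=
  (exists N : nat, forall n : int, (N < `|n|)%N -> rk X n = 0%N) /\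
  (forall n : int, amul (dif X (n + 1)) (dif X n) = azero _ _).

(* Raw degreewise maps; morphisms are chain maps modulo homotopy. *)
Definition chom (X Y : cx) := forall n : int, amx (rk Y n) (rk X n).

Definition is_chain X Y (f : chom X Y) : Prop :=
  forall n : int, amul (dif Y n) (f n) = amul (f (n + 1)) (dif X n).

Definition htpy X Y (f g : chom X Y) : Prop :=
  exists h : forall n : int, amx (rk Y n) (rk X (n + 1)),
  forall n : int,
    aadd (f (n + 1)) (aopp (g (n + 1))) =
    aadd (amul (h (n + 1)) (dif X (n + 1))) (amul (dif Y n) (h n)).

Definition hcomp X Y Z (g : chom Y Z) (f : chom X Y) : chom X Z :=
  fun n => amul (g n) (f n).
Definition hid X : chom X X := fun n => aid (rk X n).
Definition hadd X Y (f g : chom X Y) : chom X Y := fun n => aadd (f n) (g n).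
Definition hscale X Y (c : k) (f : chom X Y) : chom X Y := fun n => ascale c (f n).

Definition is_iso X Y (f : chom X Y) : Prop :=
  is_chain f /\ exists g : chom Y X, is_chain g /\
    htpy (hcomp g f) (hid X) /\ htpy (hcomp f g) (hid Y).

Definition shift (X : cx) : cx :=
  @Cx (fun n => rk X (n + 1)) (fun n => aopp (dif X (n + 1))).
Definition shiftm X Y (f : chom X Y) : chom (shift X) (shift Y) := fun n => f (n + 1).

Definition cone X Y (f : chom X Y) : cx :=
  @Cx (fun n => (rk X (n + 1) + rk Y n)%N)
     (fun n => ablock (aopp (dif X (n + 1))) (azero _ _) (f (n + 1)) (dif Y n)).
Definition cone_in X Y (f : chom X Y) : chom Y (cone f) :=
  fun n => (col_mx 0 1%:M, 0).
Definition cone_out X Y (f : chom X Y) : chom (cone f) (shift X) :=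
  fun n => (row_mx 1%:M 0, 0).

Definition dist X Y Z (u : chom X Y) (v : chom Y Z) (w : chom Z (shift X)) : Prop :=
  is_chain u /\ is_chain v /\ is_chain w /\
  exists (X' Y' : cx) (f : chom X' Y') (a : chom X X') (b : chom Y Y') (c : chom Z (cone f)),
    [/\ cx_ok X', cx_ok Y' & is_chain f] /\ [/\ is_iso a, is_iso b & is_iso c] /\
    [/\ htpy (hcomp b u) (hcomp f a),
        htpy (hcomp c v) (hcomp (cone_in f) b) &
        htpy (hcomp (shiftm a) w) (hcomp (cone_out f) c)].

Definition castm X X' Y Y' (e1 : X = X') (e2 : Y = Y') (f : chom X Y) : chom X' Y' :=
  match e1 in _ = X0, e2 in _ = Y0 return chom X0 Y0 with erefl, erefl => f end.

(* A functor on Perf(A): an object map and a map on chain-map representatives. *)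

Definition klin_autoeq (F0 : cx -> cx) (F1 : forall X Y, chom X Y -> chom (F0 X) (F0 Y)) : Prop :=
  (forall X, cx_ok X -> cx_ok (F0 X)) /\
  (forall X Y (f : chom X Y), cx_ok X -> cx_ok Y -> is_chain f -> is_chain (F1 X Y f)) /\
  (forall X Y (f g : chom X Y), cx_ok X -> cx_ok Y -> is_chain f -> is_chain g ->
     htpy f g -> htpy (F1 X Y f) (F1 X Y g)) /\
  (forall X Y Z (f : chom X Y) (g : chom Y Z), cx_ok X -> cx_ok Y -> cx_ok Z ->
     is_chain f -> is_chain g ->
     htpy (F1 X Z (hcomp g f)) (hcomp (F1 Y Z g) (F1 X Y f))) /\
  (forall X, cx_ok X -> htpy (F1 X X (hid X)) (hid (F0 X))) /\
  (forall X Y (c : k) (f g : chom X Y), cx_ok X -> cx_ok Y -> is_chain f -> is_chain g ->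
     htpy (F1 X Y (hadd (hscale c f) g)) (hadd (hscale c (F1 X Y f)) (F1 X Y g))) /\
  (forall X Y (g : chom (F0 X) (F0 Y)), cx_ok X -> cx_ok Y -> is_chain g ->
     exists f : chom X Y, is_chain f /\ htpy (F1 X Y f) g) /\
  (forall X Y (f g : chom X Y), cx_ok X -> cx_ok Y -> is_chain f -> is_chain g ->
     htpy (F1 X Y f) (F1 X Y g) -> htpy f g) /\
  (forall Y, cx_ok Y -> exists X, cx_ok X /\ exists a : chom (F0 X) Y, is_iso a).

Definition shift_comm (F0 : cx -> cx) (F1 : forall X Y, chom X Y -> chom (F0 X) (F0 Y))
  (hsh : forall X, cx_ok X -> F0 (shift X) = shift (F0 X)) : Prop :=
  forall X Y (hX : cx_ok X) (hY : cx_ok Y) (f : chom X Y), is_chain f ->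
    htpy (castm (hsh X hX) (hsh Y hY) (F1 _ _ (shiftm f))) (shiftm (F1 X Y f)).

Definition exact (F0 : cx -> cx) (F1 : forall X Y, chom X Y -> chom (F0 X) (F0 Y))
  (hsh : forall X, cx_ok X -> F0 (shift X) = shift (F0 X)) : Prop :=
  forall X Y Z (hX : cx_ok X) (hY : cx_ok Y) (hZ : cx_ok Z)
    (u : chom X Y) (v : chom Y Z) (w : chom Z (shift X)),
    dist u v w ->
    dist (F1 X Y u) (F1 Y Z v) (castm (erefl (F0 Z)) (hsh X hX) (F1 Z (shift X) w)).

(* X_j[alpha]: A in degrees -j-alpha, ..., -1-alpha, differentials eps. *)
Definition Xrk (j : nat) (a : int) (n : int) : nat :=
  if (- (j%:Z) - a <= n) && (n <= -1 - a) then 1%N else 0%N.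
(* (0, const 1) is eps on a 1x1 block and the empty matrix otherwise. *)
Definition Xobj (j : nat) (a : int) : cx :=
  @Cx (Xrk j a) (fun n => (0, const_mx 1)).

(* 1^i_{j[a]}: identity where both terms are nonzero, 0 elsewhere. *)
Definition one_gen (i j : nat) (a : int) : chom (Xobj i 0) (Xobj j a) :=
  fun n => (const_mx 1, 0).
Definition eps_gen (i j : nat) (a : int) : chom (Xobj i 0) (Xobj j a) :=
  fun n => if n == -1 then (0, const_mx 1) else (0, 0).

Definition lambda_spec (l : k) (F0 : cx -> cx)
  (F1 : forall X Y, chom X Y -> chom (F0 X) (F0 Y)) : Prop :=
  exists hfix : forall (i : nat) (a : int), (0 < i)%N -> F0 (Xobj i a) = Xobj i a,
  (forall (i j : nat) (a : int) (hi : (0 < i)%N) (hj : (0 < j)%N),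
     Num.max 0 (i%:Z - j%:Z) <= a -> a < i%:Z ->
     htpy (castm (hfix i 0 hi) (hfix j a hj) (F1 _ _ (one_gen i j a)))
          (hscale (l ^ a) (one_gen i j a))) /\
  (forall (i j : nat) (a : int) (hi : (0 < i)%N) (hj : (0 < j)%N),
     - (j%:Z) < a -> a <= Num.min 0 (i%:Z - j%:Z) ->
     htpy (castm (hfix i 0 hi) (hfix j a hj) (F1 _ _ (eps_gen i j a)))
          (hscale (l ^ a) (eps_gen i j a))) /\
  (forall (i : nat) (hi : (0 < i)%N) (f : chom (Xobj i 0) (Xobj i 0)), is_chain f ->
     htpy (castm (hfix i 0 hi) (hfix i 0 hi) (F1 _ _ f)) f).

End Perf.

(* Main.v *)
Require Import Defs.
From HB Require Import structures.
From mathcomp Require Import all_boot all_order all_algebra.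
From mathcomp Require Import zify.
From Stdlib Require Import ClassicalEpsilon FunctionalExtensionality Classical.
Import Order.TTheory GRing.Theory Num.Theory.
Local Open Scope ring_scope.
Set Implicit Arguments. Unset Strict Implicit.

Section Tool.
Variable k : fieldType.
Implicit Types X Y Z : cx k.

Lemma amulA m n p q (M : amx k m n) (N : amx k n p) (P : amx k p q) :
  amul M (amul N P) = amul (amul M N) P.
Proof.
case: M N P => [M1 M2] [N1 N2] [P1 P2]; rewrite /amul /=; congr pair.
  by rewrite mulmxA.
by rewrite !mulmxDr !mulmxDl !mulmxA addrA.
Qed.

Lemma amulDl m n p (M N : amx k m n) (P : amx k n p) :
  amul (M + N) P = amul M P + amul N P.
Proof.
case: M N P => [M1 M2] [N1 N2] [P1 P2]; rewrite /amul /=; congr pair.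
  by rewrite mulmxDl.
by rewrite !mulmxDl addrACA.
Qed.

Lemma amulDr m n p (M : amx k m n) (N P : amx k n p) :
  amul M (N + P) = amul M N + amul M P.
Proof.
case: M N P => [M1 M2] [N1 N2] [P1 P2]; rewrite /amul /=; congr pair.
  by rewrite mulmxDr.
by rewrite !mulmxDr addrACA.
Qed.

Lemma amulNl m n p (M : amx k m n) (P : amx k n p) : amul (- M) P = - amul M P.
Proof.
case: M P => [M1 M2] [P1 P2]; rewrite /amul /=; congr pair.
  by rewrite mulNmx.
by rewrite !mulNmx opprD.
Qed.

Lemma amulNr m n p (M : amx k m n) (P : amx k n p) : amul M (- P) = - amul M P.
Proof.
case: M P => [M1 M2] [P1 P2]; rewrite /amul /=; congr pair.
  by rewrite mulmxN.
by rewrite !mulmxN opprD.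
Qed.

Lemma amulZl m n p c (M : amx k m n) (P : amx k n p) :
  amul (ascale c M) P = ascale c (amul M P).
Proof.
case: M P => [M1 M2] [P1 P2]; rewrite /amul /ascale /=; congr pair.
  by rewrite -scalemxAl.
by rewrite -!scalemxAl scalerDr.
Qed.

Lemma amulZr m n p c (M : amx k m n) (P : amx k n p) :
  amul M (ascale c P) = ascale c (amul M P).
Proof.
case: M P => [M1 M2] [P1 P2]; rewrite /amul /ascale /=; congr pair.
  by rewrite -scalemxAr.
by rewrite -!scalemxAr scalerDr.
Qed.

Lemma amul1l m n (M : amx k m n) : amul (aid _ m) M = M.
Proof. case: M => [M1 M2]; rewrite /amul /aid /=; by rewrite !mul1mx mul0mx addr0. Qed.

Lemma amul1r m n (M : amx k m n) : amul M (aid _ n) = M.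
Proof. case: M => [M1 M2]; rewrite /amul /aid /=; by rewrite !mulmx1 mulmx0 add0r. Qed.

Lemma ascaleD m n c (M N : amx k m n) : ascale c (M + N) = ascale c M + ascale c N.
Proof. by case: M N => [M1 M2] [N1 N2]; rewrite /ascale /=; congr pair; rewrite scalerDr. Qed.
Lemma ascaleN m n c (M : amx k m n) : ascale c (- M) = - ascale c M.
Proof. by case: M => [M1 M2]; rewrite /ascale /=; congr pair; rewrite scalerN. Qed.
Lemma ascaleA m n c d (M : amx k m n) : ascale c (ascale d M) = ascale (c * d) M.
Proof. by case: M => [M1 M2]; rewrite /ascale /=; congr pair; rewrite scalerA. Qed.
Lemma ascale1 m n (M : amx k m n) : ascale 1 M = M.
Proof. by case: M => [M1 M2]; rewrite /ascale /=; congr pair; rewrite scale1r. Qed.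

Lemma htpy_eq X Y (f g : chom X Y) : (forall n, f n = g n) -> htpy f g.
Proof.
move=> e; exists (fun n => 0) => n.
by rewrite e; rewrite /aadd /aopp /= !mulmx0 !mul0mx !addr0 !subrr.
Qed.

Lemma htpy_refl X Y (f : chom X Y) : htpy f f.
Proof. exact: htpy_eq. Qed.

Lemma amul0l m n p (P : amx k n p) : amul (0 : amx k m n) P = 0.
Proof. by case: P => P1 P2; rewrite /amul /= !mul0mx addr0. Qed.
Lemma amul0r m n p (P : amx k m n) : amul P (0 : amx k n p) = 0.
Proof. by case: P => P1 P2; rewrite /amul /= !mulmx0 addr0. Qed.

Lemma htpyE X Y (f g : chom X Y) : htpy f g <->
  exists h : forall n : int, amx k (rk Y n) (rk X (n + 1)), forall n,
    f (n+1) - g (n+1) = amul (h (n + 1)) (dif X (n + 1)) + amul (dif Y n) (h n).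
Proof. by []. Qed.

Lemma htpy_sym X Y (f g : chom X Y) : htpy f g -> htpy g f.
Proof.
case/htpyE=> h H; apply/htpyE; exists (fun n => - h n) => n.
by rewrite amulNl amulNr -opprD -H opprB.
Qed.

Lemma htpy_trans X Y (f g e : chom X Y) : htpy f g -> htpy g e -> htpy f e.
Proof.
case/htpyE=> h H; case/htpyE=> h' H'; apply/htpyE; exists (fun n => h n + h' n) => n.
by rewrite amulDl amulDr addrACA -H -H' addrA subrK.
Qed.

Lemma htpy_compl X Y Z (f g : chom X Y) (c : chom Y Z) :
  is_chain c -> htpy f g -> htpy (hcomp c f) (hcomp c g).
Proof.
move=> cc /htpyE [h H]; apply/htpyE; exists (fun n => amul (c n) (h n)) => n.
by rewrite /hcomp [amul (dif Z n) _]amulA cc -!amulA -amulDr -H amulDr amulNr.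
Qed.

Lemma htpy_compr X Y Z (f g : chom Y Z) (c : chom X Y) :
  is_chain c -> htpy f g -> htpy (hcomp f c) (hcomp g c).
Proof.
move=> cc /htpyE [h H]; apply/htpyE; exists (fun n => amul (h n) (c (n+1))) => n.
by rewrite /hcomp -amulA -cc !amulA -amulDl -H amulDl amulNl.
Qed.

Lemma hcompA X Y Z W (f : chom Z W) (g : chom Y Z) (e : chom X Y) n :
  hcomp f (hcomp g e) n = hcomp (hcomp f g) e n.
Proof. exact: amulA. Qed.

Lemma chain_comp X Y Z (f : chom Y Z) (g : chom X Y) :
  is_chain f -> is_chain g -> is_chain (hcomp f g).
Proof. by move=> cf cg n; rewrite /hcomp amulA cf -amulA cg amulA. Qed.

Lemma chain_shift X Y (f : chom X Y) : is_chain f -> is_chain (shiftm f).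
Proof. by move=> cf n; rewrite /shiftm /= amulNl amulNr cf. Qed.

Lemma htpy_shift X Y (f g : chom X Y) : htpy f g -> htpy (shiftm f) (shiftm g).
Proof.
case/htpyE=> h H; apply/htpyE; exists (fun n => - h (n + 1)) => n.
rewrite /shiftm /= !amulNl !amulNr !opprK. exact: H.
Qed.

Lemma chain_scale X Y c (f : chom X Y) : is_chain f -> is_chain (hscale c f).
Proof. by move=> cf n; rewrite /hscale amulZr amulZl cf. Qed.

Lemma htpy_scale X Y c (f g : chom X Y) : htpy f g -> htpy (hscale c f) (hscale c g).
Proof.
case/htpyE=> h H; apply/htpyE; exists (fun n => ascale c (h n)) => n.
by rewrite /hscale amulZl amulZr -ascaleD -H ascaleD ascaleN.
Qed.

End Tool.

Section Func.
Variable k : fieldType.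
Variable l : k.
Implicit Types X Y Z : cx k.

Definition hasmax X (n : int) := (rk X n != 0)%N /\ forall m : int, n < m -> rk X m = 0%N.
Definition topd X : int := epsilon (inhabits 0) (hasmax X).
Definition sdeg X : int := - topd X - 1.
Definition rr X Y : k := l ^ (sdeg Y - sdeg X).
Definition FF X Y (f : chom X Y) : chom X Y := hscale (rr X Y) f.

Lemma hasmax_uniq X n m : hasmax X n -> hasmax X m -> n = m.
Proof.
move=> [Hn Hn'] [Hm Hm']; case: (ltgtP n m) => // H.
  by move: Hm; rewrite Hn' // eqxx.
by move: Hn; rewrite Hm' // eqxx.
Qed.

Lemma topd_spec X n : hasmax X n -> topd X = n.
Proof.
move=> H; apply: (hasmax_uniq _ H); rewrite /topd.
by apply: epsilon_spec; exists n.
Qed.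

Lemma hasmax_shift X n : hasmax X n -> hasmax (shift X) (n - 1).
Proof.
move=> [H1 H2]; split => /=; first by rewrite subrK.
move=> m Hm; apply: H2; lia.
Qed.

Lemma sdeg_shift X n : hasmax X n -> sdeg (shift X) = sdeg X + 1.
Proof.
move=> H; rewrite /sdeg (topd_spec H) (topd_spec (hasmax_shift H)); lia.
Qed.

Lemma hasmax_Xobj (j : nat) (a : int) : (0 < j)%N -> hasmax (Xobj k j a) (-1 - a).
Proof.
move=> hj; split => /=.
  rewrite /Xrk lexx andbT; case: ifP => //; lia.
move=> m Hm; rewrite /Xrk; case: ifP => //; lia.
Qed.

Lemma sdeg_Xobj (j : nat) (a : int) : (0 < j)%N -> sdeg (Xobj k j a) = a.
Proof. by move=> hj; rewrite /sdeg (topd_spec (hasmax_Xobj a hj)); lia. Qed.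

Lemma zero_or_max X : cx_ok X -> (exists n, hasmax X n) \/ (forall n, rk X n = 0%N).
Proof.
move=> [[N HN] _]; case: (classic (exists n, hasmax X n)) => Hex; [by left|right].
have key : forall t : nat, forall m : int, Posz N + 1 - Posz t <= m -> rk X m = 0%N.
  elim=> [|t IH] m Hm.
    apply: HN; lia.
  case: (boolP (Posz N + 1 - Posz t <= m)) => Hm'; first exact: IH.
  have Em : m = Posz N - Posz t by lia.
  case: (rk X m =P 0%N) => // /eqP Hne; exfalso; apply: Hex; exists m; split => //.
  move=> m' Hm''; apply: IH; lia.
move=> n; apply: (key (absz (Posz N + 1 - n)%R)); lia.
Qed.

Lemma thinA m n (A B : amx k m n) : n = 0%N -> A = B.
Proof.
move=> e; move: A B; rewrite e => -[A1 A2] [B1 B2].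
by rewrite (thinmx0 A1) (thinmx0 A2) (thinmx0 B1) (thinmx0 B2).
Qed.

Lemma flatA m n (A B : amx k m n) : m = 0%N -> A = B.
Proof.
move=> e; move: A B; rewrite e => -[A1 A2] [B1 B2].
by rewrite (flatmx0 A1) (flatmx0 A2) (flatmx0 B1) (flatmx0 B2).
Qed.

Lemma rrM (hl : l != 0) X Y Z : rr X Z = rr Y Z * rr X Y.
Proof. by rewrite /rr -expfzDr // addrA subrK. Qed.

Lemma rr1 X : rr X X = 1.
Proof. by rewrite /rr subrr expr0z. Qed.

Lemma rr_neq0 (hl : l != 0) X Y : rr X Y != 0.
Proof. exact: expfz_neq0. Qed.

Lemma htpy_ext X Y (f f' g g' : chom X Y) :
  (forall n, f n = f' n) -> (forall n, g n = g' n) -> htpy f g -> htpy f' g'.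
Proof.
move=> ef eg H.
have h1 : htpy f' f by apply: htpy_eq => n; rewrite ef.
have h2 : htpy g g' by apply: htpy_eq.
exact: htpy_trans h1 (htpy_trans H h2).
Qed.

Lemma chain_hid X : is_chain (hid X).
Proof. by move=> n; rewrite /hid amul1r amul1l. Qed.

Lemma iso_hid X : is_iso (hid X).
Proof.
split; first exact: chain_hid.
exists (hid X); split; first exact: chain_hid.
by split; apply: htpy_eq => n; rewrite /hcomp amul1l.
Qed.

Lemma FF_klin (hl : l != 0) : @klin_autoeq k (fun X => X) FF.
Proof.
split; first by [].
split; first by move=> X Y f _ _ cf; exact: chain_scale.
split; first by move=> X Y f g _ _ _ _ H; exact: htpy_scale.
split.
  move=> X Y Z f g _ _ _ _ _; apply: htpy_eq => n.
  by rewrite /FF /hscale /hcomp amulZl amulZr ascaleA (rrM hl X Y Z).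
split; first by move=> X _; apply: htpy_eq => n; rewrite /FF /hscale rr1 ascale1.
split.
  move=> X Y c f g _ _ _ _; apply: htpy_eq => n.
  by rewrite /FF /hscale /hadd ascaleD !ascaleA mulrC.
split.
  move=> X Y g _ _ cg; exists (hscale (rr X Y)^-1 g); split; first exact: chain_scale.
  apply: htpy_eq => n; by rewrite /FF /hscale ascaleA mulfV ?ascale1 // rr_neq0.
split.
  move=> X Y f g _ _ _ _ H; move: (htpy_scale (rr X Y)^-1 H).
  apply: htpy_ext => n; by rewrite /FF /hscale ascaleA mulVf ?ascale1 // rr_neq0.
move=> Y hY; exists Y; split; first exact: hY.
exists (hid Y). exact: iso_hid.
Qed.

Definition hshF : forall X : cx k, cx_ok X -> (fun X => X) (shift X) = shift ((fun X => X) X) :=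
  fun X _ => erefl.

Lemma FF_shift (hl : l != 0) : @shift_comm k (fun X => X) FF hshF.
Proof.
move=> X Y hX hY f cf; apply: htpy_eq => n; rewrite /castm /FF /hscale /shiftm /=.
case: (zero_or_max hX) => [[nx Hx]|HX]; last by apply: thinA; rewrite HX.
case: (zero_or_max hY) => [[ny Hy]|HY]; last by apply: flatA; rewrite HY.
rewrite /rr (sdeg_shift Hx) (sdeg_shift Hy); congr ascale; congr (_ ^ _); lia.
Qed.

Lemma FF_spec (hl : l != 0) : @lambda_spec k l (fun X => X) FF.
Proof.
exists (fun i a _ => erefl); split; last split.
- move=> i j a hi hj _ _; apply: htpy_eq => n.
  by rewrite /castm /FF /rr (sdeg_Xobj a hj) (sdeg_Xobj 0 hi) subr0.
- move=> i j a hi hj _ _; apply: htpy_eq => n.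
  by rewrite /castm /FF /rr (sdeg_Xobj a hj) (sdeg_Xobj 0 hi) subr0.
- move=> i hi f _; apply: htpy_eq => n.
  by rewrite /castm /FF /hscale rr1 ascale1.
Qed.

End Func.

Section Cone.
Variable k : fieldType.
Implicit Types X Y Z : cx k.

Definition acol m1 m2 n (P : amx k m1 n) (Q : amx k m2 n) : amx k (m1 + m2) n :=
  (col_mx P.1 Q.1, col_mx P.2 Q.2).
Definition arow m n1 n2 (P : amx k m n1) (Q : amx k m n2) : amx k m (n1 + n2) :=
  (row_mx P.1 Q.1, row_mx P.2 Q.2).

Lemma amul_bb m1 m2 n1 n2 p1 p2 (A : amx k m1 n1) (B : amx k m1 n2) (C : amx k m2 n1)
  (D : amx k m2 n2) (A' : amx k n1 p1) (B' : amx k n1 p2) (C' : amx k n2 p1) (D' : amx k n2 p2) :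
  amul (ablock A B C D) (ablock A' B' C' D') =
  ablock (amul A A' + amul B C') (amul A B' + amul B D') (amul C A' + amul D C') (amul C B' + amul D D').
Proof.
rewrite /amul /ablock /=; congr pair; first by rewrite mulmx_block.
by rewrite !mulmx_block add_block_mx /= !addrA; congr block_mx; rewrite -!addrA; congr (_ + _);
  rewrite addrCA.
Qed.

Lemma amul_bc m1 m2 n1 n2 p (A : amx k m1 n1) (B : amx k m1 n2) (C : amx k m2 n1)
  (D : amx k m2 n2) (P : amx k n1 p) (Q : amx k n2 p) :
  amul (ablock A B C D) (acol P Q) = acol (amul A P + amul B Q) (amul C P + amul D Q).
Proof.
rewrite /amul /ablock /acol /=; congr pair; first by rewrite mul_block_col.
by rewrite !mul_block_col add_col_mx /= !addrA; congr col_mx; rewrite -!addrA; congr (_ + _);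
  rewrite addrCA.
Qed.

Lemma amul_rb m n1 n2 p1 p2 (P : amx k m n1) (Q : amx k m n2) (A : amx k n1 p1) (B : amx k n1 p2)
  (C : amx k n2 p1) (D : amx k n2 p2) :
  amul (arow P Q) (ablock A B C D) = arow (amul P A + amul Q C) (amul P B + amul Q D).
Proof.
rewrite /amul /ablock /arow /=; congr pair; first by rewrite mul_row_block.
by rewrite !mul_row_block add_row_mx /= !addrA; congr row_mx; rewrite -!addrA; congr (_ + _);
  rewrite addrCA.
Qed.

Lemma amul_cl m1 m2 n p (P : amx k m1 n) (Q : amx k m2 n) (R : amx k n p) :
  amul (acol P Q) R = acol (amul P R) (amul Q R).
Proof.
rewrite /amul /acol /=; congr pair; first by rewrite mul_col_mx.
by rewrite !mul_col_mx add_col_mx.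
Qed.

Lemma amul_rr m n p1 p2 (R : amx k m n) (P : amx k n p1) (Q : amx k n p2) :
  amul R (arow P Q) = arow (amul R P) (amul R Q).
Proof.
rewrite /amul /arow /=; congr pair; first by rewrite mul_mx_row.
by rewrite !mul_mx_row add_row_mx.
Qed.

Lemma azeroE m n : azero k m n = 0. Proof. by []. Qed.

Lemma ablock0 m1 m2 n1 n2 : ablock (0 : amx k m1 n1) (0 : amx k m1 n2) (0 : amx k m2 n1) (0 : amx k m2 n2) = 0.
Proof. by rewrite /ablock /= !block_mx0. Qed.

Lemma cone_inE X Y (f : chom X Y) n : cone_in f n = acol 0 (aid _ _).
Proof. by rewrite /cone_in /acol /= col_mx0. Qed.

Lemma cone_outE X Y (f : chom X Y) n : cone_out f n = arow (aid _ _) 0.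
Proof. by rewrite /cone_out /arow /= row_mx0. Qed.

Lemma chain_cone_in X Y (f : chom X Y) : is_chain (cone_in f).
Proof.
move=> n; rewrite !cone_inE /= amul_bc amul_cl !amul0l !amul0r amul1r amul1l.
by rewrite !add0r.
Qed.

Lemma chain_cone_out X Y (f : chom X Y) : is_chain (cone_out f).
Proof.
move=> n; rewrite !cone_outE /= amul_rb amul_rr !amul0l !amul0r amul1r amul1l.
by rewrite ?addr0 ?add0r.
Qed.

Lemma cone_ok X Y (f : chom X Y) : cx_ok X -> cx_ok Y -> is_chain f -> cx_ok (cone f).
Proof.
move=> [[Nx HX] dX] [[Ny HY] dY] cf; split.
  exists (Nx + Ny).+1 => n Hn /=.
  rewrite HX ?HY //; lia.
move=> n /=; rewrite amul_bb !amul0l !amul0r !amulNl !amulNr opprK.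
rewrite (dX (n + 1)) (dY n) (cf (n + 1)) addNr !azeroE.
by rewrite !addr0 ablock0.
Qed.

Definition cmap X Y X' Y' (u : chom X Y) (f : chom X' Y') (a : chom X X') (b : chom Y Y')
  (h : forall n : int, amx k (rk Y' n) (rk X (n + 1))) : chom (cone u) (cone f) :=
  fun n => ablock (a (n + 1)) 0 (h n) (b n).

Lemma chain_cmap X Y X' Y' (u : chom X Y) (f : chom X' Y') (a : chom X X') (b : chom Y Y') h :
  is_chain a -> is_chain b ->
  (forall n, hcomp b u (n+1) - hcomp f a (n+1) = amul (h (n + 1)) (dif X (n + 1)) + amul (dif Y' n) (h n)) ->
  is_chain (cmap u f a b h).
Proof.
move=> ca cb H n; rewrite /cmap /= !amul_bb !amul0l !amul0r !amulNl !amulNr.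
rewrite (ca (n + 1)) (cb n) !addr0 !add0r; congr ablock.
move: (H n); rewrite /hcomp => /eqP; rewrite subr_eq => /eqP ->.
by rewrite !addrA addNr add0r addrC.
Qed.

Lemma cmap_in X Y X' Y' (u : chom X Y) (f : chom X' Y') (a : chom X X') (b : chom Y Y') h n :
  hcomp (cmap u f a b h) (cone_in u) n = hcomp (cone_in f) b n.
Proof.
rewrite /hcomp /cmap !cone_inE amul_bc amul_cl !amul0l !amul0r amul1r amul1l.
by rewrite ?addr0 ?add0r.
Qed.

Lemma cmap_out X Y X' Y' (u : chom X Y) (f : chom X' Y') (a : chom X X') (b : chom Y Y') h n :
  hcomp (cone_out f) (cmap u f a b h) n = hcomp (shiftm a) (cone_out u) n.
Proof.
rewrite /hcomp /cmap !cone_outE amul_rb amul_rr !amul0l !amul0r amul1r amul1l.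
by rewrite ?addr0 ?add0r.
Qed.

End Cone.

Section Concrete.
Variable k : fieldType.

Lemma col0_mx m n (A : 'M[k]_(0, n)) (B : 'M[k]_(m, n)) : (col_mx A B : 'M_(0 + m, n)) = B.
Proof.
apply/matrixP => i j; rewrite mxE; case: splitP => [[i' //]|i' Ei].
by congr (B _ j); apply: val_inj.
Qed.

Lemma row1_0 (A : 'M[k]_(1, 0)) : (row_mx (1%:M : 'M[k]_1) A : 'M_(1, 1 + 0)) = 1%:M.
Proof.
apply/matrixP => i j; rewrite mxE; case: splitP => [j' Ej|[j' //]].
by rewrite !ord1 /=; congr (1%:M _ _); apply: val_inj => /=; rewrite Ej.
Qed.

Lemma const11 : (const_mx 1 : 'M[k]_1) = 1%:M.
Proof. by apply/matrixP => i j; rewrite !ord1 !mxE. Qed.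

Lemma scal11 (c : k) : (c *: (1%:M : 'M[k]_1)) = 1%:M -> c = 1.
Proof. by move/matrixP => /(_ ord0 ord0); rewrite !mxE mulr1. Qed.

End Concrete.

Section Main.
Variable k : fieldType.

Definition X1 : cx k := Xobj k 1 0.
Definition U : chom X1 X1 := eps_gen k 1 1 0.
Definition ZZ : cx k := cone U.

Lemma min_inv (X Y : cx k) (f g : chom X Y) :
  (forall n, (dif X n).1 = 0) -> (forall n, (dif Y n).1 = 0) -> htpy f g ->
  forall n, (f n).1 = (g n).1.
Proof.
move=> hX hY /htpyE [h H] n.
have E := congr1 fst (H (n - 1)).
rewrite /= hX hY mulmx0 mul0mx addr0 in E.
move: E; rewrite subrK => /eqP; rewrite subr_eq0 => /eqP //.
Qed.

Lemma dX1min n : (dif X1 n).1 = 0. Proof. by []. Qed.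
Lemma dsX1min n : (dif (shift X1) n).1 = 0. Proof. by rewrite /= oppr0. Qed.
Lemma dZmin n : (dif ZZ n).1 = 0.
Proof. by rewrite /= /U /eps_gen; case: ifP => _ /=; rewrite oppr0 block_mx0. Qed.

Lemma blk1 (A : 'M[k]_(0,1)) (B : 'M[k]_(0,0)) (D : 'M[k]_(1,0)) :
  (block_mx A B (const_mx 1) D : 'M_(0+1, 1+0)) = 1%:M.
Proof. by rewrite /block_mx col0_mx const11 row1_0. Qed.

Lemma cancel_l (X Y Z : cx k) (a : chom Y Z) (a' : chom Z Y) (P Q : chom X Y) :
  is_chain P -> is_chain Q -> htpy (hcomp a' a) (hid Y) -> is_chain a' ->
  htpy (hcomp a P) (hcomp a Q) -> htpy P Q.
Proof.
move=> cP cQ Ha ca' H.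
have h1 := htpy_compl ca' H.
have h2 := htpy_sym (htpy_compr cP Ha).
have h3 := htpy_compr cQ Ha.
have e1 : htpy P (hcomp a' (hcomp a P)).
  apply: (htpy_ext _ _ h2) => n; rewrite /hcomp ?amul1l //; by rewrite amulA.
have e2 : htpy (hcomp a' (hcomp a Q)) Q.
  apply: (htpy_ext _ _ h3) => n; rewrite /hcomp ?amul1l //; by rewrite amulA.
exact: htpy_trans e1 (htpy_trans h1 e2).
Qed.

Lemma not_dist (l : k) : l != 1 -> ~ dist U (cone_in U) (hscale l (cone_out U)).
Proof.
move=> hl1 [cu [cv [cw [X' [Y' [f [a [b [c [[okX' okY' cf] [[ia ib ic] [H1 H2 H3]]]]]]]]]]]].
case: ia => ca [a' [ca' [Ha'a _]]].
case: ib => cb _.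
case: ic => cc [c' [cc' [Hc'c Hcc']]].
case/htpyE: H1 => h Hh.
have cphi := chain_cmap ca cb Hh.
pose phi := cmap U f a b h.
pose g := hcomp c' phi.
have cg : is_chain g := chain_comp cc' cphi.
have HA : htpy (hcomp g (cone_in U)) (cone_in U).
  have s1 := htpy_sym (htpy_compl cc' H2).
  have s2 := htpy_compr (chain_cone_in U) Hc'c.
  have s3 : htpy (hcomp g (cone_in U)) (hcomp (hcomp c' c) (cone_in U)).
    apply: (htpy_ext _ _ s1) => n; rewrite /g /hcomp.
      by rewrite -amulA; congr amul; exact: esym (cmap_in U f a b h n).
    by rewrite amulA.
  apply: htpy_trans s3 _; apply: (htpy_ext _ _ s2) => n //.
  by rewrite /hcomp /hid amul1l.
have HB : htpy (cone_out U) (hcomp (hscale l (cone_out U)) g).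
  have t1 := htpy_sym (htpy_compl (chain_cone_out f) (htpy_compr cphi Hcc')).
  have t2 := htpy_compr cg (htpy_sym H3).
  have t3 : htpy (hcomp (shiftm a) (cone_out U)) (hcomp (hcomp (cone_out f) c) g).
    apply: (htpy_ext _ _ t1) => n; rewrite /hcomp /hid.
      by rewrite amul1l; exact: (cmap_out U f a b h n).
    by rewrite /g !amulA.
  have t4 : htpy (hcomp (shiftm a) (cone_out U)) (hcomp (shiftm a) (hcomp (hscale l (cone_out U)) g)).
    apply: htpy_trans t3 _; apply: (htpy_ext _ _ t2) => n //.
    by rewrite /hcomp amulA.
  apply: (cancel_l (chain_cone_out U) _ _ (chain_shift ca') t4).
    exact: chain_comp (chain_scale l (chain_cone_out U)) cg.
  exact: htpy_shift Ha'a.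
clearbody g.
have EA := min_inv dX1min dZmin HA (-1).
have EB := min_inv dZmin dsX1min HB (-2).
have EC := congr1 snd (cg (-2)).
rewrite /hcomp /amul /= in EA.
rewrite col0_mx mulmx1 in EA.
rewrite /hcomp /amul /hscale /ascale /= in EB.
rewrite row1_0 in EB.
rewrite /amul /= oppr0 block_mx0 mul0mx add0r mulmx0 addr0 blk1 mul1mx mulmx1 in EC.
rewrite /= in EA.
have EA' : (g (-2 + 1)).1 = 1%:M := EA.
rewrite EC EA' mulmx1 in EB.
by move/eqP: hl1; apply; apply: scal11; rewrite -EB.
Qed.

End Main.

Section Final.
Variable k : fieldType.

Lemma X1ok : cx_ok (X1 k).
Proof.
split.
  exists 1%N => n Hn /=; rewrite /Xrk; case: ifP => // /andP [H1 H2]; lia.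
by move=> n; rewrite /amul /= !mul0mx !mulmx0 addr0.
Qed.

Lemma chainU : is_chain (U k).
Proof.
move=> n; rewrite /amul /U /eps_gen /=.
by case: ifP => _; case: ifP => _ /=; rewrite !mul0mx !mulmx0 ?addr0.
Qed.

Lemma ZZok : cx_ok (ZZ k).
Proof. exact: cone_ok X1ok X1ok chainU. Qed.

Lemma distT : dist (U k) (cone_in (U k)) (cone_out (U k)).
Proof.
split; first exact: chainU.
split; first exact: chain_cone_in.
split; first exact: chain_cone_out.
exists (X1 k), (X1 k), (U k), (hid _), (hid _), (hid _).
split; first by split; [exact: X1ok|exact: X1ok|exact: chainU].
split; first by split; exact: iso_hid.
split; apply: htpy_eq => n; by rewrite /hcomp /shiftm /hid amul1l amul1r.
Qed.

Lemma hasmaxZZ : hasmax (ZZ k) (-1).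
Proof.
split => //= m Hm.
rewrite /Xrk; case: ifP => [/andP [H1 H2]|_]; first lia.
case: ifP => [/andP [H1 H2]|_] //; lia.
Qed.

Lemma hscale1 (X Y : cx k) (f : chom X Y) : hscale 1 f = f.
Proof. apply: functional_extensionality_dep => n; exact: ascale1. Qed.

Lemma FF_not_exact (l : k) : l != 0 -> l != 1 -> ~ @exact k (fun X => X) (FF l) (@hshF k).
Proof.
move=> hl hl1 Hex.
have := Hex _ _ _ X1ok X1ok ZZok _ _ _ distT.
rewrite /castm /FF.
have s1 : sdeg (X1 k) = 0 := sdeg_Xobj k 0 (isT : (0 < 1)%N).
have s2 : sdeg (ZZ k) = 0 by rewrite /sdeg (topd_spec hasmaxZZ).
have s3 : sdeg (shift (X1 k)) = 1 by rewrite (sdeg_shift (hasmax_Xobj k 0 (isT : (0 < 1)%N))) s1.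
rewrite /rr s1 s2 s3 subr0 expr0z expr1z !hscale1.
exact: not_dist.
Qed.

End Final.

Unset Implicit Arguments.
Set Strict Implicit.

Theorem corollary5p13 (k : fieldType) (hk : exists l : k, l != 0 /\ l != 1) :
  (exists (F0 : cx k -> cx k) (F1 : forall X Y : cx k, chom X Y -> chom (F0 X) (F0 Y))
          (hsh : forall X, cx_ok X -> F0 (shift X) = shift (F0 X)),
      klin_autoeq F1 /\ shift_comm F1 hsh /\ ~ exact F1 hsh)
  /\
  (forall l : k, l != 0 -> l != 1 ->
    exists (F0 : cx k -> cx k) (F1 : forall X Y : cx k, chom X Y -> chom (F0 X) (F0 Y))
           (hsh : forall X, cx_ok X -> F0 (shift X) = shift (F0 X)),
      [/\ lambda_spec l F1, klin_autoeq F1, shift_comm F1 hsh & ~ exact F1 hsh]).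
Proof.
have main : forall l : k, l != 0 -> l != 1 ->
    exists (F0 : cx k -> cx k) (F1 : forall X Y : cx k, chom X Y -> chom (F0 X) (F0 Y))
           (hsh : forall X, cx_ok X -> F0 (shift X) = shift (F0 X)),
      [/\ lambda_spec l F1, klin_autoeq F1, shift_comm F1 hsh & ~ exact F1 hsh].
  move=> l hl hl1; exists (fun X => X), (FF l), (@hshF k).
  split; [exact: FF_spec | exact: FF_klin | exact: FF_shift | exact: FF_not_exact].
split => //.
case: hk => l [hl hl1]; case: (main l hl hl1) => F0 [F1 [hsh [_ H1 H2 H3]]].
by exists F0, F1, hsh.
Qed.
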